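(* Let $\mathcal{O}_1$ and $\mathcal{O}_2$ be classes of ordinals, each of which is a ''class of plump ordinals'' in the following sense: for $i \in \{1,2\}$ and every ordinal $\alpha$, we have $\alpha \in \mathcal{O}_i$ if and only if both (a) $\alpha \subseteq \mathcal{O}_i$, and (b) for every $\beta \in \alpha$, every set $\gamma \subseteq \beta$ with $\gamma \in \mathcal{O}_i$ satisfies $\gamma \in \alpha$. Then $\mathcal{O}_1 = \mathcal{O}_2$.
   Context: The setting is intuitionistic set theory with set induction (e.g. intuitionistic Kripke–Platek set theory $\mathrm{IKP}$). An ordinal is a transitive set all of whose elements are transitive; $\mathrm{Ord}$ is the class of ordinals. Condition (b) says $\mathcal{P}(\beta) \cap \mathcal{O}_i \subseteq \alpha$. *)

(* Defs.v *)
(* A "universe of sets" is a type U with a membership relation mem; classes are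
   predicates U -> Prop. *)

(** Set induction (∈-induction), the schema available in IKP, for arbitrary classes. *)
Definition set_induction {U : Type} (mem : U -> U -> Prop) : Prop :=
  forall P : U -> Prop,
    (forall x, (forall y, mem y x -> P y) -> P x) -> forall x, P x.

Definition subset {U : Type} (mem : U -> U -> Prop) (x y : U) : Prop :=
  forall z, mem z x -> mem z y.

Definition transitive_set {U : Type} (mem : U -> U -> Prop) (x : U) : Prop :=
  forall y, mem y x -> subset mem y x.

Definition ordinal {U : Type} (mem : U -> U -> Prop) (x : U) : Prop :=
  transitive_set mem x /\ forall y, mem y x -> transitive_set mem y.

Definition plump_class {U : Type} (mem : U -> U -> Prop) (O : U -> Prop) : Prop :=
  (forall x, O x -> ordinal mem x) /\
  (forall alpha, ordinal mem alpha ->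
     (O alpha <->
        ((forall beta, mem beta alpha -> O beta) /\
         (forall beta, mem beta alpha ->
            forall gamma, subset mem gamma beta -> O gamma -> mem gamma alpha)))).

(* Main.v *)
Require Import Defs.

Lemma dir (U : Type) (mem : U -> U -> Prop) (O1 O2 : U -> Prop) :
  plump_class mem O1 -> plump_class mem O2 -> forall x,
  (forall y, mem y x -> forall g, subset mem g y -> (O1 g <-> O2 g)) ->
  forall g, subset mem g x -> O1 g -> O2 g.
Proof.
  intros [H1o H1] [H2o H2] x IH g Hg Og.
  pose proof (H1o g Og) as Ord.
  destruct (proj1 (H1 g Ord) Og) as [Ha Hb].
  apply (proj2 (H2 g Ord)). split.
  - intros b Hb'. apply (IH b (Hg b Hb') b (fun z h => h)). auto.
  - intros b Hb' d Hd Od. apply (Hb b Hb' d Hd).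
    apply (IH b (Hg b Hb') d Hd). exact Od.
Qed.

Theorem proposition1p1 (U : Type) (mem : U -> U -> Prop)
  (Hind : set_induction mem) (O1 O2 : U -> Prop) :
  plump_class mem O1 -> plump_class mem O2 ->
  forall x, O1 x <-> O2 x.
Proof.
  intros P1 P2.
  assert (forall x g, subset mem g x -> (O1 g <-> O2 g)) as K.
  { apply (Hind (fun x => forall g, subset mem g x -> (O1 g <-> O2 g))).
    intros x IH g Hg. split.
    - apply (dir U mem O1 O2 P1 P2 x IH g Hg).
    - refine (dir U mem O2 O1 P2 P1 x _ g Hg).
      intros y Hy h Hh. apply iff_sym. apply (IH y Hy h Hh). }
  intros x. apply (K x x). intros z h; exact h.
Qed.
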